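(* Let $X$ be a linearly ordered set and let $k,n\ge1$ be odd natural numbers with $k\le\sqrt n$. Then $\mathrm{med}_k\in\langle\{\mathrm{med}_n\}\rangle$.
   Context: A clone on $X$ is a set of finitary operations on $X$ containing all projections and closed under composition; $\langle\mathscr F\rangle$ is the smallest clone containing $\mathscr F$. For odd $n$, $\mathrm{med}_n(x_1,\dots,x_n)$ is the $\frac{n+1}{2}$-th smallest entry of $(x_1,\dots,x_n)$ (counted with multiplicity) with respect to the linear order of $X$. *)

(* Defs.v *)
From mathcomp Require Import all_boot all_order.
Set Implicit Arguments. Unset Strict Implicit. Unset Printing Implicit Defensive.
Import Order.TTheory.
Local Open Scope order_scope.

Definition op (X : Type) := {n : nat & (('I_n -> X) -> X)}.

Definition mkop (X : Type) (n : nat) (f : ('I_n -> X) -> X) : op X := existT _ n f.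

Definition is_clone (X : Type) (C : op X -> Prop) : Prop :=
  (forall (n : nat) (i : 'I_n), C (mkop (fun x : 'I_n -> X => x i))) /\
  (forall (n m : nat) (f : ('I_n -> X) -> X) (g : 'I_n -> ('I_m -> X) -> X),
      C (mkop f) -> (forall i, C (mkop (g i))) ->
      C (mkop (fun x : 'I_m -> X => f (fun i => g i x)))).

Definition clone_gen (X : Type) (F : op X -> Prop) : op X -> Prop :=
  fun o => forall C : op X -> Prop, is_clone C -> (forall f, F f -> C f) -> C o.

(* med of arity m.+1: the ((m.+1 + 1)/2)-th smallest entry (1-based),
   i.e. index ((m.+2)/2 - 1) of the sorted list of entries (with multiplicity). *)
Definition med_fun (d : Order.disp_t) (X : orderType d) (m : nat)
  (x : 'I_m.+1 -> X) : X :=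
  nth (x ord0) (sort (<=%O : rel X) (codom x)) ((m.+2)./2).-1.

Definition med (d : Order.disp_t) (X : orderType d) (n : nat) : op X :=
  mkop (@med_fun d X n.-1).

(* Main.v *)
Require Import Defs.
From mathcomp Require Import all_boot all_order zify.
From Stdlib Require Import FunctionalExtensionality.
Import Order.TTheory.
Lemma wcount (k m n : nat) (P : pred nat) : 0 < k -> m * k <= n ->
  m * count P (iota 0 k) <= count (fun j => P (j %% k)) (iota 0 n).
Proof.
move=> k0 mkn.
rewrite -(subnKC mkn) iotaD count_cat; apply: leq_trans (leq_addr _ _).
apply: eq_leq; elim: m {mkn} => [|m IH]; first by rewrite mul0n.
rewrite [m.+1 * k]mulSnr iotaD count_cat -IH add0n mulSnr; congr (_ + _).
rewrite -(addn0 (m * k)) iotaDl count_map; apply: eq_in_count => j.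
rewrite mem_iota add0n => /andP[_ jk] /=; by rewrite ?addn0 modnMDl modn_small.
Qed.

Lemma arith a b k n m r c1 c2 wlt wge wle : k = 2*a+1 -> n = 2*b+1 ->
  n = m*k + r -> r < k -> k <= m -> c1 <= a -> a < c2 ->
  wlt + wge = n -> m*(k - c1) <= wge -> m * c2 <= wle -> wlt <= b /\ b < wle.
Proof.
move=> -> -> e rk km h1 h2 ew hge hle.
have t1 : m * (a+1) <= m*(2*a+1 - c1) by apply: leq_mul => //; lia.
have t2 : m * (a+1) <= m*c2 by apply: leq_mul => //; lia.
have t3 : m * (2*a+1) = 2 * (m*a) + m by lia.
have t4 : m * (a+1) = m*a + m by lia.
lia.
Qed.
Section S.
Variables (d : Order.disp_t) (X : orderType d).
Local Open Scope order_scope.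

Lemma fwd (t : seq X) (x0 : X) (p : nat) : sorted <=%O t -> (p < size t)%N ->
  (count (fun y : X => (y < nth x0 t p)%O) t <= p)%N /\
  (p < count (fun y : X => (y <= nth x0 t p)%O) t)%N.
Proof.
move=> st pt; set w := nth x0 t p.
have hle := sorted_leq_nth (@le_trans _ X) (@lexx _ X) x0 st.
split.
- rewrite -(cat_take_drop p t) count_cat.
  have -> : count (fun y : X => (y < w)%O) (drop p t) = 0%N.
    apply/eqP; rewrite -leqn0 leqNgt -has_count; apply/hasPn => y /(nthP x0) [j hj <-].
    rewrite nth_drop -leNgt; apply: hle; rewrite ?inE /=; [exact pt | by move: hj; rewrite size_drop ltn_subRL | exact: leq_addr].
  rewrite addn0; apply: leq_trans (count_size _ _) _; by rewrite size_takel // ltnW.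
- rewrite -(cat_take_drop p.+1 t) count_cat.
  have : count (fun y : X => (y <= w)%O) (take p.+1 t) = size (take p.+1 t).
    apply/eqP; rewrite -all_count; apply/allP => y /(nthP x0) [j hj <-].
    rewrite size_takel // in hj; rewrite nth_take //.
    apply: hle; rewrite ?inE //; exact: leq_trans hj pt.
  rewrite size_takel // => ->; exact: leq_addr.
Qed.

Lemma charac (t : seq X) (x0 v : X) (p : nat) : sorted <=%O t -> (p < size t)%N ->
  (count (fun y : X => (y < v)%O) t <= p)%N -> (p < count (fun y : X => (y <= v)%O) t)%N ->
  nth x0 t p = v.
Proof.
move=> st pt h1 h2; have [f1 f2] := fwd t x0 p st pt; set w := nth x0 t p in f1 f2 *.
case: (ltgtP w v) => // hwv.
- have : (count (fun y : X => (y <= w)%O) t <= count (fun y : X => (y < v)%O) t)%N.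
    by apply: sub_count => y /= hy; apply: le_lt_trans hy hwv.
  lia.
- have : (count (fun y : X => (y <= v)%O) t <= count (fun y : X => (y < w)%O) t)%N.
    by apply: sub_count => y /= hy; apply: le_lt_trans hy hwv.
  lia.
Qed.

Lemma cnt N (f : 'I_N -> X) (g : nat -> X) (Q : pred X) :
  (forall i : 'I_N, f i = g i) ->
  count Q (sort <=%O (codom f)) = count (fun j => Q (g j)) (iota 0 N).
Proof.
move=> H; rewrite count_sort codomE count_map -val_enum_ord count_map.
by apply: eq_count => i /=; rewrite H.
Qed.

Lemma key (k' n' : nat) (x : 'I_k'.+1 -> X) : odd k'.+1 -> odd n'.+1 ->
  (k'.+1 * k'.+1 <= n'.+1)%N ->
  @med_fun d X k' x = @med_fun d X n' (fun j : 'I_n'.+1 => x (inord (j %% k'.+1))).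
Proof.
move=> ok on kn.
pose a := k'./2; pose b := n'./2.
have ek : k' = (2 * a)%N.
  by rewrite /a -[in LHS](odd_double_half k') -(negbK (odd k')) -/(odd k'.+1) ok add0n -mul2n.
have en : n' = (2 * b)%N.
  by rewrite /b -[in LHS](odd_double_half n') -(negbK (odd n')) -/(odd n'.+1) on add0n -mul2n.
have epk : (k'.+2)./2.-1 = a by rewrite ek mul2n -doubleS doubleK.
have epn : (n'.+2)./2.-1 = b by rewrite en mul2n -doubleS doubleK.
set v := @med_fun d X k' x.
have hsz : ((k'.+2)./2.-1 < size (sort <=%O (codom x)))%N.
  by rewrite size_sort size_codom card_ord epk ek; lia.
have [a1 a2] : (count (fun y : X => (y < v)%O) (sort <=%O (codom x)) <= (k'.+2)./2.-1)%N /\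
   ((k'.+2)./2.-1 < count (fun y : X => (y <= v)%O) (sort <=%O (codom x)))%N.
  exact: fwd (sort <=%O (codom x)) (x ord0) ((k'.+2)./2.-1) (sort_le_sorted _) hsz.
rewrite epk in a1 a2.
rewrite (cnt _ _ (fun i => x (inord i))) in a1; last by move=> i; rewrite inord_val.
rewrite (cnt _ _ (fun i => x (inord i))) in a2; last by move=> i; rewrite inord_val.
clearbody v.
rewrite /med_fun epn.
pose m := (n'.+1 %/ k'.+1)%N; pose r := (n'.+1 %% k'.+1)%N.
have ediv : n'.+1 = (m * k'.+1 + r)%N by rewrite /m /r -divn_eq.
have rk : (r < k'.+1)%N by rewrite /r ltn_pmod.
have km : (k'.+1 <= m)%N by rewrite /m leq_divRL.
have mkn : (m * k'.+1 <= n'.+1)%N by rewrite ediv leq_addr.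
have Wle := wcount _ _ _ (fun i => (x (inord i) <= v)%O) (ltn0Sn k') mkn.
have Wge := wcount _ _ _ (fun i => ~~ (x (inord i) < v)%O) (ltn0Sn k') mkn.
have Cge := count_predC (fun i => (x (inord i) < v)%O) (iota 0 k'.+1).
have Wsum := count_predC (fun j => (x (inord (j %% k'.+1)) < v)%O) (iota 0 n'.+1).
rewrite size_iota in Cge; rewrite size_iota in Wsum.
have Wge' : (m * (k'.+1 - count (fun i => (x (inord i) < v)%O) (iota 0 k'.+1)) <=
   count (predC (fun j => (x (inord (j %% k'.+1)) < v)%O)) (iota 0 n'.+1))%N.
  have e1 : (k'.+1 - count (fun i => (x (inord i) < v)%O) (iota 0 k'.+1) =
     count (predC (fun i => (x (inord i) < v)%O)) (iota 0 k'.+1))%N by lia.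
  rewrite e1; exact: Wge.
apply/esym; apply: charac.
- exact: sort_le_sorted.
- by rewrite size_sort size_codom card_ord en; lia.
- rewrite (cnt _ _ (fun j => x (inord (j %% k'.+1)))) //.
  have ek1 : k'.+1 = (2*a+1)%N by rewrite ek addn1.
  have en1 : n'.+1 = (2*b+1)%N by rewrite en addn1.
  have [h _] := @arith _ _ _ _ _ _ _ _ _ _ _ ek1 en1 ediv rk km a1 a2 Wsum Wge' Wle.
  exact: h.
- rewrite (cnt _ _ (fun j => x (inord (j %% k'.+1)))) //.
  have ek1 : k'.+1 = (2*a+1)%N by rewrite ek addn1.
  have en1 : n'.+1 = (2*b+1)%N by rewrite en addn1.
  have [_ h] := @arith _ _ _ _ _ _ _ _ _ _ _ ek1 en1 ediv rk km a1 a2 Wsum Wge' Wle.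
  exact: h.
Qed.
End S.

Theorem mainTheorem3 (d : Order.disp_t) (X : orderType d) (k n : nat) :
  odd k -> odd n -> k * k <= n ->
  clone_gen (fun o => o = med X n) (med X k).
Proof.
move=> ok on kn C [Hp Hc] HF.
case: k ok kn => [|k'] // ok kn; case: n on kn HF => [|n'] // on kn HF.
have Hm : C (mkop (@med_fun d X n')) by apply: HF.
have H := Hc n'.+1 k'.+1 (@med_fun d X n')
  (fun (j : 'I_n'.+1) (y : 'I_k'.+1 -> X) => y (inord (j %% k'.+1))) Hm
  (fun j => Hp k'.+1 (inord (j %% k'.+1))).
have -> : med X k'.+1 = mkop (fun y : 'I_k'.+1 -> X =>
   @med_fun d X n' (fun j : 'I_n'.+1 => y (inord (j %% k'.+1)))).
  rewrite /med /=; congr mkop; apply: functional_extensionality => y.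
  exact: key.
exact: H.
Qed.
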